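(* Let $k\ge 4$ and $n\ge 2$ be integers, and let $\ket{a_1},\dots,\ket{a_n},\ket{b_1},\dots,\ket{b_n}\in\mathbb{C}^k$ be vectors such that the set $\{\ket{a_1},\dots,\ket{a_n},\ket{b_1},\dots,\ket{b_n}\}$ is linearly independent (so $2n\le k$). Put $\ket{v}=\sum_{i=1}^n \ket{a_i}\otimes\ket{b_i}\in\mathbb{C}^k\otimes\mathbb{C}^k$ and, for $\varepsilon>0$, $$\gamma_\varepsilon=\mathbb{I}+\mathbb{F}+\varepsilon\,\ket{v}\!\bra{v},$$ where $\mathbb{I}$ is the identity on $\mathbb{C}^k\otimes\mathbb{C}^k$ and $\mathbb{F}=\sum_{i,j=1}^k\ket{i}\!\bra{j}\otimes\ket{j}\!\bra{i}$ is the swap operator. Then there exists $\varepsilon_0>0$ such that for every $0<\varepsilon<\varepsilon_0$, the normalized state $\gamma_\varepsilon/\mathrm{Tr}(\gamma_\varepsilon)$ is entangled, has positive semidefinite partial transpose (i.e. it is a PPT entangled, or bound entangled, state), and its realignment $\mathcal{R}(\gamma_\varepsilon)$ is an invertible matrix (i.e. the state is faithful and hence can serve as a probe state for ancilla-assisted quantum process tomography).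
   Context: $\{\ket{i}\}_{i=1}^k$ is the computational basis of $\mathbb{C}^k$. For an operator $\rho=\sum_{i,j,k,l}\rho_{ij,kl}\,\ket{i}\!\bra{j}\otimes\ket{k}\!\bra{l}$ on $\mathbb{C}^k\otimes\mathbb{C}^k$, the realignment is $\mathcal{R}(\rho)=\sum_{i,j,k,l}\rho_{ij,kl}\,\ket{i}\!\bra{k}\otimes\ket{j}\!\bra{l}$. The partial transpose $\rho^\Gamma$ is the transpose on the second tensor factor in the computational basis. A bipartite state is called faithful if $\mathcal{R}(\rho)$ has no zero singular values (is invertible); faithfulness is the condition under which the state can replace the maximally entangled state in ancilla-assisted quantum process tomography. A state is entangled if it is not a convex combination of product states. *)

(* Defs.v *)
From HB Require Import structures.
From mathcomp Require Import all_boot all_order all_algebra.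
From mathcomp Require Import complex mxtens.
From mathcomp Require Import reals.
Set Implicit Arguments.
Unset Strict Implicit.
Unset Printing Implicit Defensive.
Import Order.TTheory GRing.Theory Num.Theory.
Local Open Scope ring_scope.

Section QI.
Variable C : numClosedFieldType.

Definition adjmx m n (A : 'M[C]_(m, n)) : 'M[C]_(n, m) := (map_mx Num.conj A)^T.

(* positive semidefinite: <x|M|x> >= 0 for all x (in a numClosedField,
   0 <= z means z is real and nonnegative) *)
Definition psdmx n (M : 'M[C]_n) : Prop :=
  forall x : 'cV[C]_n, 0 <= (adjmx x *m M *m x) 0 0.

Definition density n (M : 'M[C]_n) : Prop := psdmx M /\ \tr M = 1.

Definition swapmx k : 'M[C]_(k * k) :=
  \sum_(i < k) \sum_(j < k) (delta_mx i j *t delta_mx j i).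

(* coefficient rho_{ij,kl} of |i><j| (x) |k><l| *)
Definition coef k (rho : 'M[C]_(k * k)) (i j k' l : 'I_k) : C :=
  rho (mxtens_index (i, k')) (mxtens_index (j, l)).

Definition ptrans k (rho : 'M[C]_(k * k)) : 'M[C]_(k * k) :=
  \sum_(i < k) \sum_(j < k) \sum_(k' < k) \sum_(l < k)
    coef rho i j k' l *: (delta_mx i j *t delta_mx l k').

Definition realign k (rho : 'M[C]_(k * k)) : 'M[C]_(k * k) :=
  \sum_(i < k) \sum_(j < k) \sum_(k' < k) \sum_(l < k)
    coef rho i j k' l *: (delta_mx i k' *t delta_mx j l).

Definition separable k (rho : 'M[C]_(k * k)) : Prop :=
  exists (N : nat) (p : 'I_N -> C) (sigma tau : 'I_N -> 'M[C]_k),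
    (forall m, 0 <= p m) /\ \sum_(m < N) p m = 1 /\
    (forall m, density (sigma m)) /\ (forall m, density (tau m)) /\
    rho = \sum_(m < N) p m *: (sigma m *t tau m).

Definition entangled k (rho : 'M[C]_(k * k)) : Prop :=
  density rho /\ ~ separable rho.

Definition lin_indep2 k n (a b : 'I_n -> 'cV[C]_k) : Prop :=
  forall c d : 'I_n -> C,
    \sum_(i < n) c i *: a i + \sum_(i < n) d i *: b i = 0 ->
    (forall i, c i = 0) /\ (forall i, d i = 0).

Definition vvec k n (a b : 'I_n -> 'cV[C]_k) : 'cV[C]_(k * k) :=
  \sum_(i < n) (a i *t b i : 'M[C]_(k * k, 1)).

Definition gammaeps k n (a b : 'I_n -> 'cV[C]_k) (eps : C) : 'M[C]_(k * k) :=
  1%:M + swapmx k + eps *: (vvec a b *m adjmx (vvec a b)).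

End QI.

(* Main.v *)
Require Import Defs.
From HB Require Import structures.
From mathcomp Require Import all_boot all_order all_algebra.
From mathcomp Require Import complex mxtens spectral sesquilinear ring.
From mathcomp Require Import reals.
Set Implicit Arguments.
Unset Strict Implicit.
Unset Printing Implicit Defensive.
Import Order.TTheory GRing.Theory Num.Theory.
Local Open Scope ring_scope.

Section Gen.
Variable C : numClosedFieldType.
Variable k : nat.
Local Notation ix a b := (@mxtens_index k k (a, b)).
Definition form n (M : 'M[C]_n) (x : 'cV[C]_n) := (adjmx x *m M *m x) 0 0.

Lemma sum_pair (F : 'I_(k * k) -> C) :
  \sum_p F p = \sum_a \sum_b F (ix a b).
Proof.
rewrite pair_big /=.
rewrite (reindex (@mxtens_index k k)) /=; last first.
  by exists (@mxtens_unindex k k) => i _; rewrite (mxtens_indexK, mxtens_unindexK).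
by apply: eq_bigr => -[i j].
Qed.

Lemma sum_only n (F : 'I_n -> C) a : (forall i, i != a -> F i = 0) -> \sum_i F i = F a.
Proof. by move=> H; rewrite (bigD1 a) //= big1 ?addr0. Qed.

Lemma ix_eq a b c d : (ix a b == ix c d) = ((a == c) && (b == d)).
Proof. by rewrite (can_eq (@mxtens_indexK k k)) xpair_eqE. Qed.

Lemma formE n (M : 'M[C]_n) x : form M x = \sum_p \sum_q (x p 0)^* * M p q * x q 0.
Proof.
rewrite /form mxE; rewrite exchange_big /=; apply: eq_bigr => q _.
rewrite mxE mulr_suml; apply: eq_bigr => p _.
by rewrite /adjmx !mxE.
Qed.
Lemma sum_only' n (F : 'I_n -> C) a : (forall i, (a == i) = false -> F i = 0) -> \sum_i F i = F a.
Proof. by move=> H; apply: sum_only => i Hi; apply: H; rewrite eq_sym (negbTE Hi). Qed.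

Lemma id_entry a b c d : (1%:M : 'M[C]_(k*k)) (ix a b) (ix c d) = ((a == c) && (b == d))%:R.
Proof. by rewrite mxE ix_eq. Qed.

Lemma swap_entry a b c d : swapmx C k (ix a b) (ix c d) = ((a == d) && (b == c))%:R.
Proof.
rewrite /swapmx summxE (sum_only' (a := a)) => [|i Hi]; last first.
  by rewrite summxE big1 // => j _; rewrite tensmxE !mxE Hi mul0r.
rewrite summxE (sum_only' (a := c)) => [|j Hj]; last first.
  by rewrite tensmxE !mxE Hj andbF mul0r.
by rewrite tensmxE !mxE !eqxx /= mul1r andbC [d == a]eq_sym.
Qed.

Lemma ptrans_entry (M : 'M[C]_(k*k)) a b c d : ptrans M (ix a b) (ix c d) = M (ix a d) (ix c b).
Proof.
rewrite /ptrans summxE (sum_only' (a := a)) => [|i Hi]; last first.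
  by rewrite summxE big1 // => j _; rewrite summxE big1 // => k' _; rewrite summxE big1 // => l _;
    rewrite mxE tensmxE !mxE Hi /= mul0r mulr0.
rewrite summxE (sum_only' (a := c)) => [|j Hj]; last first.
  by rewrite summxE big1 // => k' _; rewrite summxE big1 // => l _;
    rewrite mxE tensmxE !mxE Hj /= ?andbF ?mul0r ?mulr0.
rewrite summxE (sum_only' (a := d)) => [|k' Hk]; last first.
  by rewrite summxE big1 // => l _; rewrite mxE tensmxE !mxE Hk /= ?andbF ?mul0r ?mulr0.
rewrite summxE (sum_only' (a := b)) => [|l Hl]; last first.
  by rewrite mxE tensmxE !mxE Hl /= ?andbF ?mul0r ?mulr0.
by rewrite mxE tensmxE !mxE !eqxx /= mulr1 mulr1 /coef.
Qed.

Lemma realign_entry (M : 'M[C]_(k*k)) a b c d : realign M (ix a b) (ix c d) = M (ix a c) (ix b d).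
Proof.
rewrite /realign summxE (sum_only' (a := a)) => [|i Hi]; last first.
  by rewrite summxE big1 // => j _; rewrite summxE big1 // => k' _; rewrite summxE big1 // => l _;
    rewrite mxE tensmxE !mxE Hi /= mul0r mulr0.
rewrite summxE (sum_only' (a := b)) => [|j Hj]; last first.
  by rewrite summxE big1 // => k' _; rewrite summxE big1 // => l _;
    rewrite mxE tensmxE !mxE Hj /= ?andbF ?mul0r ?mulr0.
rewrite summxE (sum_only' (a := c)) => [|k' Hk]; last first.
  by rewrite summxE big1 // => l _; rewrite mxE tensmxE !mxE Hk /= ?andbF ?mul0r ?mulr0.
rewrite summxE (sum_only' (a := d)) => [|l Hl]; last first.
  by rewrite mxE tensmxE !mxE Hl /= ?andbF ?mul0r ?mulr0.
by rewrite mxE tensmxE !mxE !eqxx /= mulr1 mulr1 /coef.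
Qed.
Definition mat (x : 'cV[C]_(k*k)) : 'M[C]_k := \matrix_(a, b) x (ix a b) 0.
Definition ip (X Y : 'M[C]_k) := \sum_a \sum_b (X a b)^* * Y a b.

Lemma dotE (x y : 'cV[C]_(k*k)) : (adjmx x *m y) 0 0 = ip (mat x) (mat y).
Proof.
rewrite mxE sum_pair; apply: eq_bigr => a _; apply: eq_bigr => b _.
by rewrite !mxE.
Qed.

Lemma dot_conj n (x y : 'cV[C]_n) : (adjmx x *m y) 0 0 = ((adjmx y *m x) 0 0)^*.
Proof.
rewrite !mxE rmorph_sum; apply: eq_bigr => p _.
by rewrite !mxE rmorphM /= conjCK mulrC.
Qed.

Lemma formE2 (M : 'M[C]_(k*k)) x : form M x =
  \sum_a \sum_b \sum_c \sum_d (x (ix a b) 0)^* * M (ix a b) (ix c d) * x (ix c d) 0.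
Proof.
rewrite formE sum_pair; apply: eq_bigr => a _; apply: eq_bigr => b _.
by rewrite sum_pair.
Qed.

Lemma formD n (A B : 'M[C]_n) x : form (A + B) x = form A x + form B x.
Proof. by rewrite /form mulmxDr mulmxDl mxE. Qed.

Lemma formZ n c (A : 'M[C]_n) x : form (c *: A) x = c * form A x.
Proof. by rewrite /form -scalemxAr -scalemxAl mxE. Qed.

Lemma form_sum n I (r : seq I) (P : pred I) (F : I -> 'M[C]_n) x :
  form (\sum_(i <- r | P i) F i) x = \sum_(i <- r | P i) form (F i) x.
Proof.
rewrite /form mulmx_sumr mulmx_suml summxE; apply: eq_bigr => i _ //.
Qed.

Lemma form_rank1 n (z x : 'cV[C]_n) :
  form (z *m adjmx z) x = ((adjmx z *m x) 0 0)^* * (adjmx z *m x) 0 0.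
Proof.
rewrite /form !mulmxA -(mulmxA (adjmx x *m z)) mxE big_ord1.
by rewrite [in LHS]dot_conj.
Qed.

Lemma form_rank1_ge0 n (z x : 'cV[C]_n) : 0 <= form (z *m adjmx z) x.
Proof. by rewrite form_rank1 mulrC mul_conjC_ge0. Qed.

Lemma form_rank1_eq0 n (z x : 'cV[C]_n) :
  (form (z *m adjmx z) x == 0) = ((adjmx z *m x) 0 0 == 0).
Proof. by rewrite form_rank1 mulrC mul_conjC_eq0. Qed.
End Gen.

Section Psd.
Variable C : numClosedFieldType.
Implicit Types n : nat.

Lemma adjmxD n m (x y : 'M[C]_(n, m)) : adjmx (x + y) = adjmx x + adjmx y.
Proof. by apply/matrixP => i j; rewrite !mxE rmorphD. Qed.

Lemma adjmxZ n m c (x : 'M[C]_(n, m)) : adjmx (c *: x) = c^* *: adjmx x.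
Proof. by apply/matrixP => i j; rewrite !mxE rmorphM. Qed.

Lemma adjmxK n m (x : 'M[C]_(n, m)) : adjmx (adjmx x) = x.
Proof. by apply/matrixP => i j; rewrite !mxE conjCK. Qed.

Definition bf n (B : 'M[C]_n) (x y : 'cV[C]_n) := (adjmx x *m B *m y) 0 0.

Lemma form_add n (B : 'M[C]_n) x y :
  form B (x + y) = form B x + form B y + bf B x y + bf B y x.
Proof.
rewrite /form /bf adjmxD !mulmxDl !mulmxDr !mxE; ring.
Qed.

Lemma form_scale n (B : 'M[C]_n) c x : form B (c *: x) = c^* * c * form B x.
Proof. by rewrite /form adjmxZ -scalemxAr -!scalemxAl scalerA mxE [c * _]mulrC. Qed.

Lemma bf_scaler n (B : 'M[C]_n) c x y : bf B x (c *: y) = c * bf B x y.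
Proof. by rewrite /bf -scalemxAr mxE. Qed.

Lemma bf_scalel n (B : 'M[C]_n) c x y : bf B (c *: x) y = c^* * bf B x y.
Proof. by rewrite /bf adjmxZ -!scalemxAl mxE. Qed.

Lemma bf_delta n (B : 'M[C]_n) p q : bf B (delta_mx p 0) (delta_mx q 0) = B p q.
Proof.
rewrite /bf; have -> : adjmx (delta_mx p 0 : 'cV[C]_n) = delta_mx 0 p.
  by apply/matrixP => i j; rewrite !mxE rmorph_nat !ord1 eqxx andbC.
by rewrite -rowE -colE !mxE.
Qed.

Lemma form0_eq0 n (B : 'M[C]_n) : (forall x, form B x = 0) -> B = 0.
Proof.
move=> H; apply/matrixP => p q; rewrite mxE.
set ep := (delta_mx p 0 : 'cV[C]_n); set eq := (delta_mx q 0 : 'cV[C]_n).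
have h1 := H (ep + eq); rewrite form_add !H !add0r in h1.
have h2 := H (ep + 'i *: eq); rewrite form_add form_scale !H mulr0 !add0r
  bf_scaler bf_scalel conjCi in h2.
rewrite /ep /eq !bf_delta in h1 h2.
have e : B p q * ('i *+ 2) = 'i * (B p q + B q p) + ('i * B p q + - 'i * B q p) by ring.
rewrite h1 h2 mulr0 addr0 in e.
move/eqP: e; rewrite mulf_eq0 => /orP [/eqP //|].
by rewrite -mulr_natr mulf_eq0 (negbTE (@neq0Ci C)) pnatr_eq0.
Qed.
Lemma form_conj n (A : 'M[C]_n) x : (form A x)^* = form (adjmx A) x.
Proof.
rewrite !formE rmorph_sum exchange_big; apply: eq_bigr => q _.
rewrite rmorph_sum; apply: eq_bigr => p _.
by rewrite !mxE !rmorphM /= conjCK; ring.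
Qed.

Lemma formB n (A B : 'M[C]_n) x : form (A - B) x = form A x - form B x.
Proof. by rewrite -scaleN1r formD formZ mulN1r. Qed.

Lemma psd_herm n (A : 'M[C]_n) : psdmx A -> adjmx A = A.
Proof.
move=> HA; suff: A - adjmx A = 0 by move/eqP; rewrite subr_eq0 => /eqP e; rewrite -e.
apply: form0_eq0 => x; rewrite formB -form_conj geC0_conj ?subrr //.
exact: HA.
Qed.

Lemma psd_decomp n (A : 'M[C]_n) : psdmx A ->
  exists X : 'I_n -> 'cV[C]_n, A = \sum_r X r *m adjmx (X r).
Proof.
move=> HA; have hA := psd_herm HA.
have normal : A \is normalmx.
  have e : map_mx Num.conj A^T = A by rewrite -map_trmx.
  by apply/normalmxP; rewrite e.
have /orthomx_spectralP eA := normal.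
set P := spectralmx A in eA; set d := spectral_diag A in eA.
have Pu : P \is unitarymx by exact: spectral_unitarymx.
set Q := invmx P in eA.
have QE : forall i j, Q i j = (P j i)^*.
  by move=> i j; rewrite /Q invmx_unitary // !mxE.
have PQ : P *m Q = 1%:M by rewrite mulmxV // unitarymx_unit.
pose q r := col r Q.
have qq : forall s r, (adjmx (q s) *m q r) 0 0 = (1%:M : 'M[C]_n) s r.
  move=> s r; rewrite -PQ !mxE; apply: eq_bigr => i _.
  by rewrite !mxE QE conjCK.
have Adec : A = \sum_r d 0 r *: (q r *m adjmx (q r)).
  rewrite [in LHS]eA; apply/matrixP => i j; rewrite mxE summxE.
  apply: eq_bigr => r _; rewrite mul_mx_diag !mxE big_ord1 ?mxE [Q j r]QE conjCK.
  by ring.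
have dge0 : forall r, 0 <= d 0 r.
  move=> r; have := HA (q r); rewrite -/(form A (q r)) {1}Adec form_sum.
  rewrite (bigD1 r) //= big1 ?addr0 => [|s /negbTE Hs]; last first.
    by rewrite formZ form_rank1 qq mxE Hs /= conjC0 !mulr0.
  by rewrite formZ form_rank1 qq mxE eqxx /= conjC1 !mulr1.
exists (fun r => sqrtC (d 0 r) *: q r).
rewrite {1}Adec; apply: eq_bigr => r _.
rewrite adjmxZ -scalemxAr -scalemxAl scalerA geC0_conj ?sqrtC_ge0 //.
by rewrite -expr2 sqrtCK.
Qed.
End Psd.

Section IP.
Variable C : numClosedFieldType.
Variable k : nat.
Local Notation ix a b := (@mxtens_index k k (a, b)).

Implicit Types X Y Z W : 'M[C]_k.
Lemma ipDr X Y Z : ip X (Y + Z) = ip X Y + ip X Z.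
Proof. rewrite /ip -big_split; apply: eq_bigr => a _; rewrite -big_split; apply: eq_bigr => b _ /=; rewrite mxE; ring. Qed.
Lemma ipZr X c Y : ip X (c *: Y) = c * ip X Y.
Proof. rewrite /ip mulr_sumr; apply: eq_bigr => a _; rewrite mulr_sumr; apply: eq_bigr => b _; rewrite mxE; ring. Qed.
Lemma ipZl X c Y : ip (c *: X) Y = c^* * ip X Y.
Proof. rewrite /ip mulr_sumr; apply: eq_bigr => a _; rewrite mulr_sumr; apply: eq_bigr => b _; rewrite mxE rmorphM; ring. Qed.
Lemma ipDl X Y Z : ip (X + Y) Z = ip X Z + ip Y Z.
Proof. rewrite /ip -big_split; apply: eq_bigr => a _; rewrite -big_split; apply: eq_bigr => b _ /=; rewrite mxE rmorphD /=; ring. Qed.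
Lemma ipNl X Y : ip (- X) Y = - ip X Y.
Proof. by rewrite -scaleN1r ipZl rmorphN1 mulN1r. Qed.
Lemma ipNr X Y : ip X (- Y) = - ip X Y.
Proof. by rewrite -scaleN1r ipZr mulN1r. Qed.
Lemma ipBl X Y Z : ip (X - Y) Z = ip X Z - ip Y Z.
Proof. by rewrite ipDl ipNl. Qed.
Lemma ipBr X Y Z : ip X (Y - Z) = ip X Y - ip X Z.
Proof. by rewrite ipDr ipNr. Qed.
Lemma ip0r X : ip X 0 = 0.
Proof. by rewrite /ip big1 // => a _; rewrite big1 // => b _; rewrite mxE mulr0. Qed.
Lemma ipT X Y : ip X^T Y = ip X Y^T.
Proof. by rewrite /ip exchange_big; apply: eq_bigr => a _; apply: eq_bigr => b _; rewrite !mxE. Qed.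
Lemma ip_anti X W : W^T = - W -> ip X^T W = - ip X W.
Proof. by move=> hW; rewrite ipT hW ipNr. Qed.
Lemma ip_ge0 X : 0 <= ip X X.
Proof. by apply: sumr_ge0 => a _; apply: sumr_ge0 => b _; rewrite mulrC mul_conjC_ge0. Qed.
Lemma ip_eq0 X : ip X X = 0 -> X = 0.
Proof.
move=> /eqP; rewrite /ip psumr_eq0 => [/allP H1|a _]; last first.
  by apply: sumr_ge0 => b _; rewrite mulrC mul_conjC_ge0.
apply/matrixP => a b; rewrite mxE.
have := H1 a (mem_index_enum _); rewrite /=.
rewrite psumr_eq0 => [/allP H2|c _]; last by rewrite mulrC mul_conjC_ge0.
by have := H2 b (mem_index_enum _); rewrite /= mulrC mul_conjC_eq0 => /eqP.
Qed.
Lemma ip_conj X Y : (ip X Y)^* = ip Y X.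
Proof.
rewrite /ip rmorph_sum; apply: eq_bigr => a _; rewrite rmorph_sum; apply: eq_bigr => b _.
by rewrite rmorphM /= conjCK mulrC.
Qed.

Lemma stepC (V Z : 'M[C]_k) (x y : 'cV[C]_k) : Z = x *m y^T ->
  ip Z (V - V^T) != 0 ->
  (forall U, U^T = - U -> ip V U = 0 -> ip Z U = 0) -> (\rank (V - V^T)%R <= 2)%N.
Proof.
move=> hZ hnz hU.
set VA := V - V^T; set ZA := Z - Z^T.
have VAt : VA^T = - VA by rewrite /VA linearB /= trmxK opprB.
have ZAt : ZA^T = - ZA by rewrite /ZA linearB /= trmxK opprB.
have two : forall c : C, c *+ 2 = 0 -> c = 0.
  by move=> c /eqP; rewrite -mulr_natr mulf_eq0 pnatr_eq0 orbF => /eqP.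
have ipVA : forall U, U^T = - U -> ip VA U = (ip V U) *+ 2.
  by move=> U hU'; rewrite /VA ipBl ip_anti // opprK mulr2n.
have ipZA : forall U, U^T = - U -> ip ZA U = (ip Z U) *+ 2.
  by move=> U hU'; rewrite /ZA ipBl ip_anti // opprK mulr2n.
have VAnz : ip VA VA != 0.
  by apply: contraNneq hnz => /ip_eq0 hV; rewrite -/VA hV ip0r.
pose al := ip VA ZA / ip VA VA.
pose U := ZA - al *: VA.
have Ut : U^T = - U.
  by rewrite /U linearB /= linearZ /= ZAt VAt scalerN [RHS]opprD !opprK.
have VAU : ip VA U = 0 by rewrite /U ipBr ipZr /al mulfVK // subrr.
have VU : ip V U = 0 by apply: two; rewrite -ipVA.
have ZU : ip ZA U = 0 by rewrite ipZA // hU // mul0rn.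
have U0 : U = 0.
  apply: ip_eq0; rewrite {1}/U ipBl ipZl ZU VAU mulr0 subrr //.
have eZA : ZA = al *: VA by apply/eqP; rewrite -subr_eq0 -/U U0.
have alnz : al != 0.
  apply: contraNneq hnz => al0; rewrite -/VA.
  have e : ip Z VA = ip ZA V by rewrite /VA /ZA ipBr ipBl ipT.
  by rewrite e eZA al0 scale0r /ip big1 // => a _; rewrite big1 // => b _; rewrite mxE rmorph0 mul0r.
have -> : VA = al^-1 *: ZA by rewrite eZA scalerA mulVf // scale1r.
rewrite mxrank_scale_nz ?invr_eq0 //.
have -> : ZA = row_mx x y *m col_mx y^T (- x^T).
  by rewrite mul_row_col /ZA hZ trmx_mul trmxK mulmxN.
by apply: leq_trans (mxrankM_maxl _ _) (rank_leq_col _).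
Qed.
End IP.

Section Rank.
Variable C : numClosedFieldType.
Variables k n : nat.
Variables a b : 'I_n -> 'cV[C]_k.
Local Notation ix i j := (@mxtens_index k k (i, j)).
Definition At : 'M[C]_(n, k) := \matrix_(i, j) a i j 0.
Definition Bt : 'M[C]_(n, k) := \matrix_(i, j) b i j 0.

Lemma tens_col (x y : 'cV[C]_k) i j : (x *t y) (ix i j) 0 = x i 0 * y j 0.
Proof.
have -> : (0 : 'I_(1*1)) = mxtens_index ((0 : 'I_1), (0 : 'I_1)) by apply: val_inj.
by rewrite tensmxE; congr (x _ _ * y _ _); apply: val_inj.
Qed.

Lemma matv : mat (vvec a b) = At^T *m Bt.
Proof.
apply/matrixP => i j; rewrite !mxE summxE; apply: eq_bigr => m _.
by rewrite tens_col !mxE.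
Qed.

Lemma indep_mx (c d : 'rV[C]_n) : lin_indep2 a b -> c *m At + d *m Bt = 0 -> c = 0 /\ d = 0.
Proof.
move=> hind h.
have [|hc hd] := hind (fun i => c 0 i) (fun i => d 0 i).
  apply/matrixP => j l; rewrite [l]ord1 [RHS]mxE.
  transitivity ((c *m At + d *m Bt) 0 j); last by rewrite h mxE.
  by rewrite !mxE !summxE; congr (_ + _); apply: eq_bigr => i _; rewrite !mxE.
by split; apply/matrixP => i j; rewrite (ord1 i) mxE ?hc ?hd.
Qed.

Lemma rank_VA : lin_indep2 a b ->
  \rank (mat (vvec a b) - (mat (vvec a b))^T) = (n + n)%N.
Proof.
move=> hind.
have e : mat (vvec a b) - (mat (vvec a b))^T = (col_mx At Bt)^T *m col_mx Bt (- At).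
  by rewrite matv tr_col_mx mul_row_col trmx_mul trmxK mulmxN.
have fX : row_free (col_mx At Bt).
  apply: inj_row_free => v hv; rewrite -[v]hsubmxK in hv *.
  rewrite mul_row_col in hv; have [-> ->] := indep_mx hind hv.
  by rewrite row_mx0.
have fY : row_free (col_mx Bt (- At)).
  apply: inj_row_free => v hv; rewrite -[v]hsubmxK in hv *.
  rewrite mul_row_col mulmxN -mulNmx addrC in hv.
  have [h1 h2] := indep_mx hind hv.
  by rewrite h2 -[rsubmx v]opprK h1 oppr0 row_mx0.
rewrite e -mxrank_tr trmx_mul trmxK mxrankMfree // mxrank_tr.
exact/eqP.
Qed.
End Rank.

Section Bounds.
Variable C : numClosedFieldType.

Lemma sq_le_sum n (x : 'cV[C]_n) p : `|x p 0| ^+ 2 <= \sum_q `|x q 0| ^+ 2.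
Proof.
rewrite (bigD1 p) //= lerDl; apply: sumr_ge0 => q _; exact: exprn_ge0.
Qed.

Lemma prod_le (s t : C) : 0 <= s -> 0 <= t -> s * t <= s ^+ 2 + t ^+ 2.
Proof.
move=> hs ht; have := real_leVge (ger0_real hs) (ger0_real ht).
case/orP => h.
  apply: le_trans (_ : t ^+ 2 <= _); last by rewrite lerDr exprn_ge0.
  by rewrite expr2 ler_wpM2r.
apply: le_trans (_ : s ^+ 2 <= _); last by rewrite lerDl exprn_ge0.
by rewrite expr2 ler_wpM2l.
Qed.

Lemma form_bound n (M : 'M[C]_n) x :
  `|form M x| <= (\sum_p \sum_q `|M p q|) * ((\sum_p `|x p 0| ^+ 2) *+ 2).
Proof.
set N := \sum_p _.
rewrite formE mulr_suml; apply: le_trans (ler_norm_sum _ _ _) _.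
apply: ler_sum => p _; rewrite mulr_suml.
apply: le_trans (ler_norm_sum _ _ _) _; apply: ler_sum => q _.
rewrite !normrM norm_conjC [_ * `|M p q|]mulrC -mulrA.
apply: ler_wpM2l => //.
apply: le_trans (prod_le (normr_ge0 _) (normr_ge0 _)) _.
by rewrite mulr2n lerD // sq_le_sum.
Qed.

Lemma kill_row m (u : 'rV[C]_m) c (N : 'M[C]_m) :
  u = c *: (u *m N) -> `|c| * (\sum_p \sum_q `|N p q|) < 1 -> u = 0.
Proof.
move=> hu hc.
set L := \sum_q `|u 0 q|.
have L0 : 0 <= L by apply: sumr_ge0 => q _.
have hL : L <= L * (`|c| * (\sum_p \sum_q `|N p q|)).
  have eR : \sum_q `|c| * \sum_p L * `|N p q| = L * (`|c| * \sum_p \sum_q `|N p q|).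
    rewrite -mulr_sumr exchange_big /= [RHS]mulrCA; congr (_ * _).
    by rewrite mulr_sumr; apply: eq_bigr => p _; rewrite mulr_sumr.
  rewrite -eR {1}/L; apply: ler_sum => q _.
  rewrite {1}hu mxE normrM ler_wpM2l // mxE.
  apply: le_trans (ler_norm_sum _ _ _) _; apply: ler_sum => p _.
  rewrite normrM ler_wpM2r //.
  by rewrite /L (bigD1 p) //= lerDl; apply: sumr_ge0.
have {hL} : L == 0.
  move: L0; rewrite le_eqVlt => /orP [/eqP <- //|Lp].
  by move: hL; rewrite ler_pMr // => h1; have := lt_le_trans hc h1; rewrite ltxx.
move=> /eqP /psumr_eq0P H; apply/matrixP => i j; rewrite (ord1 i) mxE.
by apply/eqP; rewrite -normr_eq0; apply/eqP; apply: H.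
Qed.
End Bounds.

Section Lin.
Variable C : numClosedFieldType.
Variable k : nat.
Local Notation ix a b := (@mxtens_index k k (a, b)).
Implicit Types A B : 'M[C]_(k * k).

Lemma ptransD A B : ptrans (A + B) = ptrans A + ptrans B.
Proof.
apply/matrixP => p q; case: (mxtens_indexP p) => a b; case: (mxtens_indexP q) => c d.
by rewrite mxE !ptrans_entry mxE.
Qed.
Lemma ptransZ c A : ptrans (c *: A) = c *: ptrans A.
Proof.
apply/matrixP => p q; case: (mxtens_indexP p) => a b; case: (mxtens_indexP q) => e d.
by rewrite mxE !ptrans_entry mxE.
Qed.
Lemma realignD A B : realign (A + B) = realign A + realign B.
Proof.
apply/matrixP => p q; case: (mxtens_indexP p) => a b; case: (mxtens_indexP q) => c d.
by rewrite mxE !realign_entry mxE.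
Qed.
Lemma realignZ c A : realign (c *: A) = c *: realign A.
Proof.
apply/matrixP => p q; case: (mxtens_indexP p) => a b; case: (mxtens_indexP q) => e d.
by rewrite mxE !realign_entry mxE.
Qed.
Lemma ptrans1 : ptrans (1%:M : 'M[C]_(k*k)) = 1%:M.
Proof.
apply/matrixP => p q; case: (mxtens_indexP p) => a b; case: (mxtens_indexP q) => c d.
by rewrite ptrans_entry !id_entry eq_sym [d == b]eq_sym andbC.
Qed.

Definition omega : 'cV[C]_(k*k) := \col_p ((mxtens_unindex p).1 == (mxtens_unindex p).2)%:R.
Lemma omega_entry a b : omega (ix a b) 0 = (a == b)%:R.
Proof. by rewrite mxE mxtens_indexK. Qed.

Lemma rank1_entry n (z : 'cV[C]_n) p q : (z *m adjmx z) p q = z p 0 * (z q 0)^*.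
Proof. by rewrite mxE big_ord1 !mxE. Qed.

Lemma ptransF : ptrans (swapmx C k) = omega *m adjmx omega.
Proof.
apply/matrixP => p q; case: (mxtens_indexP p) => a b; case: (mxtens_indexP q) => c d.
rewrite ptrans_entry swap_entry rank1_entry !omega_entry rmorph_nat -natrM mulnb.
by rewrite [d == c]eq_sym.
Qed.

Lemma realignF : realign (swapmx C k) = swapmx C k.
Proof.
apply/matrixP => p q; case: (mxtens_indexP p) => a b; case: (mxtens_indexP q) => c d.
by rewrite realign_entry !swap_entry [c == b]eq_sym.
Qed.

Lemma realign1_entry a b c d : realign (1%:M : 'M[C]_(k*k)) (ix a b) (ix c d) = ((a == b) && (c == d))%:R.
Proof. by rewrite realign_entry id_entry. Qed.

Lemma adj_ptrans_rank1 (z : 'cV[C]_(k*k)) : adjmx (ptrans (z *m adjmx z)) = ptrans (z *m adjmx z).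
Proof.
apply/matrixP => p q; case: (mxtens_indexP p) => a b; case: (mxtens_indexP q) => c d.
rewrite !mxE !ptrans_entry !rank1_entry rmorphM /= conjCK mulrC //.
Qed.

Lemma form_real n (M : 'M[C]_n) x : adjmx M = M -> form M x \is Num.real.
Proof. by move=> hM; rewrite CrealE form_conj hM. Qed.

Lemma form1 n (x : 'cV[C]_n) : form 1%:M x = \sum_p `|x p 0| ^+ 2.
Proof.
rewrite formE; apply: eq_bigr => p _; rewrite (sum_only' (a := p)) => [|q hq]; last first.
  by rewrite mxE hq mulr0n mulr0 mul0r.
by rewrite mxE eqxx mulr1n mulr1 normCKC.
Qed.
End Lin.

Section Main.
Variable C : numClosedFieldType.
Variables k n : nat.
Variables a b : 'I_n -> 'cV[C]_k.
Local Notation ix i j := (@mxtens_index k k (i, j)).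
Local Notation v := (vvec a b).
Local Notation P := (vvec a b *m adjmx (vvec a b)).
Local Notation F := (swapmx C k).

Definition vecm (X : 'M[C]_k) : 'cV[C]_(k*k) :=
  \col_p X (mxtens_unindex p).1 (mxtens_unindex p).2.
Lemma mat_vecm X : mat (vecm X) = X.
Proof. by apply/matrixP => i j; rewrite !mxE mxtens_indexK. Qed.

Lemma form1' (x : 'cV[C]_(k*k)) : form 1%:M x = ip (mat x) (mat x).
Proof.
rewrite formE2; apply: eq_bigr => i _; apply: eq_bigr => j _.
rewrite (sum_only' (a := i)) => [|c hc]; last first.
  by rewrite big1 // => d _; rewrite id_entry hc /= mulr0 mul0r.
rewrite (sum_only' (a := j)) => [|d hd]; last first.
  by rewrite id_entry hd andbF mulr0 mul0r.
by rewrite id_entry !eqxx mulr1 !mxE.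
Qed.

Lemma formF (x : 'cV[C]_(k*k)) : form F x = ip (mat x) (mat x)^T.
Proof.
rewrite formE2; apply: eq_bigr => i _; apply: eq_bigr => j _.
rewrite (sum_only' (a := j)) => [|c hc]; last first.
  by rewrite big1 // => d _; rewrite swap_entry hc andbF mulr0 mul0r.
rewrite (sum_only' (a := i)) => [|d hd]; last first.
  by rewrite swap_entry hd /= mulr0 mul0r.
by rewrite swap_entry !eqxx mulr1 !mxE.
Qed.

Lemma formIF x : form (1%:M + F) x = ip (mat x) (mat x) + ip (mat x) (mat x)^T.
Proof. by rewrite formD form1' formF. Qed.

Lemma formIF_ge0 x : 0 <= form (1%:M + F) x.
Proof.
rewrite formIF; set X := mat x.
have e : ip (X + X^T) (X + X^T) = (ip X X + ip X X^T) *+ 2.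
  have h1 : ip X^T X = ip X X^T by rewrite ipT.
  have h2 : ip X^T X^T = ip X X by rewrite ipT trmxK.
  rewrite ipDl !ipDr h1 h2 mulr2n; ring.
by rewrite -(pmulrn_lge0 _ (ltn0Sn 1)) -e ip_ge0.
Qed.

Lemma formIF_anti U : U^T = - U -> form (1%:M + F) (vecm U) = 0.
Proof. by move=> hU; rewrite formIF mat_vecm hU ipNr subrr. Qed.

Lemma gam_diag e p : gammaeps a b e p p = 1 + F p p + e * (v p 0 * (v p 0)^*).
Proof. by rewrite /gammaeps !mxE eqxx mulr1n big_ord1 !mxE. Qed.

Lemma trace_pos e : 0 <= e -> (0 < k)%N -> 0 < \tr (gammaeps a b e).
Proof.
move=> he hk; have p0 : 'I_(k * k) by exists 0%N; rewrite muln_gt0 hk.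
rewrite /mxtrace (bigD1 p0) //=.
have hge : forall p, 1 <= gammaeps a b e p p.
  move=> p; rewrite gam_diag -addrA lerDl; apply: addr_ge0.
    by case: (mxtens_indexP p) => i j; rewrite swap_entry ler0n.
  by apply: mulr_ge0 => //; apply: mul_conjC_ge0.
apply: lt_le_trans (_ : 0 < 1) _ => //; apply: le_trans (hge p0) _.
rewrite lerDl; apply: sumr_ge0 => p _; exact: le_trans ler01 (hge p).
Qed.
End Main.

Section Inv.
Variable C : numClosedFieldType.
Variable k : nat.
Local Notation ix i j := (@mxtens_index k k (i, j)).
Local Notation F := (swapmx C k).
Definition Om := realign (1%:M : 'M[C]_(k*k)).
Definition Minv := F - (k.+1%:R)^-1 *: Om.

Lemma M0inv : (Om + F) *m Minv = 1%:M.
Proof.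
apply/matrixP => p q; case: (mxtens_indexP p) => a b; case: (mxtens_indexP q) => c d.
rewrite mxE sum_pair id_entry.
set ka := (k.+1%:R)^-1 : C.
have e1 : forall e f, (Om + F) (ix a b) (ix e f) * Minv (ix e f) (ix c d) =
   ((a == b) && (e == f))%:R * (((e == d) && (f == c))%:R - ka * ((e == f) && (c == d))%:R)
 + ((a == f) && (b == e))%:R * (((e == d) && (f == c))%:R - ka * ((e == f) && (c == d))%:R).
  by move=> e f; rewrite /Minv /Om !mxE !realign1_entry !swap_entry -/ka mulrDl.
under eq_bigr => e _ do under eq_bigr => f _ do rewrite e1.
under eq_bigr => e _ do rewrite big_split /=.
rewrite big_split /=.
have s1 : \sum_e \sum_f ((a == b) && (e == f))%:R *
        (((e == d) && (f == c))%:R - ka * ((e == f) && (c == d))%:R)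
   = ((a == b) && (c == d))%:R * (1 - ka * k%:R).
  transitivity (\sum_e (a == b)%:R * (((e == d) && (e == c))%:R - ka * (c == d)%:R)).
    apply: eq_bigr => e _; rewrite (sum_only' (a := e)) => [|f hf]; last by rewrite hf andbF mul0r.
    by rewrite eqxx andbT.
  rewrite -mulr_sumr sumrB (sum_only' (a := d)) => [|e he]; last by rewrite eq_sym he.
  rewrite eqxx /= sumr_const card_ord [d == c]eq_sym.
  by case: (a == b); case: (c == d) => /=; ring.
have s2 : \sum_e \sum_f ((a == f) && (b == e))%:R *
        (((e == d) && (f == c))%:R - ka * ((e == f) && (c == d))%:R)
   = ((a == c) && (b == d))%:R - ka * ((a == b) && (c == d))%:R.
  rewrite (sum_only' (a := b)) => [|e he]; last first.
    by rewrite big1 // => f _; rewrite he andbF mul0r.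
  rewrite (sum_only' (a := a)) => [|f hf]; last by rewrite hf /= mul0r.
  by rewrite !eqxx /= mul1r [b == a]eq_sym andbC.
rewrite s1 s2.
have hk : ka + ka * k%:R = 1.
  by rewrite -{1}[ka]mulr1 -mulrDr addrC natr1 mulVf // pnatr_eq0.
set X := ((a == b) && (c == d))%:R; set Y := ((a == c) && (b == d))%:R.
apply/eqP; rewrite -subr_eq0; apply/eqP.
transitivity (X * (1 - (ka + ka * k%:R))); first by ring.
by rewrite hk subrr mulr0.
Qed.
End Inv.

Section Final.
Variable C : numClosedFieldType.
Variables k n : nat.
Variables a b : 'I_n -> 'cV[C]_k.
Local Notation ix i j := (@mxtens_index k k (i, j)).
Local Notation v := (vvec a b).
Local Notation P := (vvec a b *m adjmx (vvec a b)).
Local Notation F := (swapmx C k).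

Lemma realign_gamma e : realign (gammaeps a b e) = (Om C k + F) + e *: realign P.
Proof. by rewrite /gammaeps !realignD realignZ realignF. Qed.

Lemma realign_unit e :
  `|e| * (\sum_p \sum_q `|(realign P *m Minv C k) p q|) < 1 ->
  realign (gammaeps a b e) \in unitmx.
Proof.
move=> he; rewrite realign_gamma -row_free_unit; apply: inj_row_free => u hu.
apply: (@kill_row _ _ u (- e) (realign P *m Minv C k)); last by rewrite normrN.
move: hu; rewrite mulmxDr => /eqP; rewrite addr_eq0 => /eqP hu.
by rewrite -[u in LHS]mulmx1 -M0inv [in LHS]mulmxA hu -scalemxAr mulNmx -scalemxAl scaleNr mulmxA.
Qed.

Lemma tens_decomp (X Y : 'I_k -> 'cV[C]_k) :
  (\sum_r X r *m adjmx (X r)) *t (\sum_s Y s *m adjmx (Y s)) =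
  \sum_r \sum_s (X r *t Y s) *m adjmx (X r *t Y s).
Proof.
apply/matrixP => p q; case: (mxtens_indexP p) => i j; case: (mxtens_indexP q) => c d.
rewrite tensmxE !summxE mulr_suml; apply: eq_bigr => r _.
rewrite mulr_sumr summxE; apply: eq_bigr => s _.
by rewrite !rank1_entry !tens_col rmorphM; ring.
Qed.

Lemma mat_tens (x y : 'cV[C]_k) : mat (x *t y) = x *m y^T.
Proof. by apply/matrixP => i j; rewrite [LHS]mxE tens_col mxE big_ord1 !mxE. Qed.

Lemma sum_neq0 (I : finType) (G : I -> C) : \sum_i G i != 0 -> exists i, G i != 0.
Proof.
move=> h; apply/existsP; apply: contraNT h => /existsPn H; apply/eqP.
by apply: big1 => i _; apply/eqP; move: (H i); rewrite negbK.
Qed.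

Lemma density_rho e : 0 < e -> (0 < k)%N ->
  density ((\tr (gammaeps a b e))^-1 *: gammaeps a b e).
Proof.
move=> he hk; have tpos := trace_pos a b (ltW he) hk.
split.
  move=> x; change (0 <= form ((\tr (gammaeps a b e))^-1 *: gammaeps a b e) x).
  rewrite formZ /gammaeps formD formZ; apply: mulr_ge0; first by rewrite invr_ge0 ltW.
  by apply: addr_ge0; [exact: formIF_ge0 | apply: mulr_ge0; [exact: ltW | exact: form_rank1_ge0]].
by rewrite mxtraceZ mulVf // lt0r_neq0.
Qed.

Lemma ppt_rho e : 0 < e -> (0 < k)%N ->
  e * ((\sum_p \sum_q `|ptrans P p q|) *+ 2) <= 1 ->
  psdmx (ptrans ((\tr (gammaeps a b e))^-1 *: gammaeps a b e)).
Proof.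
move=> he hk hS; have tpos := trace_pos a b (ltW he) hk.
move=> x; change (0 <= form (ptrans ((\tr (gammaeps a b e))^-1 *: gammaeps a b e)) x).
rewrite ptransZ formZ; apply: mulr_ge0; first by rewrite invr_ge0 ltW.
rewrite /gammaeps !ptransD ptransZ ptrans1 ptransF !formD formZ form1.
set N := \sum_p _; set f := form (ptrans P) x.
have fr : f \is Num.real by apply: form_real; exact: adj_ptrans_rank1.
have fb := form_bound (ptrans P) x; rewrite -/N -/f in fb.
set S := \sum_p \sum_q _ in fb hS.
have N0 : 0 <= N by apply: sumr_ge0 => p _; exact: exprn_ge0.
have h1 : - (e * f) <= N.
  have r : - (e * f) \is Num.real by rewrite rpredN rpredM // gtr0_real.
  apply: le_trans (real_ler_norm r) _; rewrite normrN normrM gtr0_norm //.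
  apply: le_trans (_ : e * (S * (N *+ 2)) <= _); first by rewrite ler_wpM2l // ltW.
  rewrite mulrnAr -mulrnAl mulrA.
  exact: ler_piMl.
rewrite -addrA addrC -addrA; apply: addr_ge0; first exact: form_rank1_ge0.
by rewrite addrC -[e * f]opprK subr_ge0.
Qed.

Lemma not_sep e : 0 < e -> (0 < k)%N -> (2 <= n)%N -> lin_indep2 a b ->
  ~ separable ((\tr (gammaeps a b e))^-1 *: gammaeps a b e).
Proof.
move=> he hk hn hind.
have tpos := trace_pos a b (ltW he) hk.
set t := \tr (gammaeps a b e).
set V := mat v; set VA := V - V^T.
have rk := rank_VA hind; rewrite -/V -/VA in rk.
have VAt : VA^T = - VA by rewrite /VA linearB /= trmxK opprB.
have frho : forall x, form (t^-1 *: gammaeps a b e) x =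
    t^-1 * (form (1%:M + F) x + e * (((ip V (mat x))^*) * ip V (mat x))).
  by move=> x; rewrite formZ /gammaeps formD formZ form_rank1 dotE.
case=> N [p [sig [tau [hp [_ [hsig [htau hrho]]]]]]].
have [X hX] := fin_all_exists (fun m => psd_decomp (hsig m).1).
have [Y hY] := fin_all_exists (fun m => psd_decomp (htau m).1).
pose G (m : 'I_N) (r s : 'I_k) (x : 'cV[C]_(k*k)) := ((adjmx (X m r *t Y m s) *m x) 0 0)^* * (adjmx (X m r *t Y m s) *m x) 0 0.
have fsep : forall x, form (t^-1 *: gammaeps a b e) x = \sum_m p m * \sum_r \sum_s G m r s x.
  move=> x; rewrite hrho form_sum; apply: eq_bigr => m _.
  rewrite formZ hX hY tens_decomp form_sum; congr (_ * _); apply: eq_bigr => r _.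
  by rewrite form_sum; apply: eq_bigr => s _; rewrite form_rank1.
have Gge0 : forall m r s x, 0 <= G m r s x by move=> *; rewrite /G mulrC mul_conjC_ge0.
have ipVVA : ip VA VA = (ip V VA) *+ 2 by rewrite {1}/VA ipBl ip_anti // opprK mulr2n.
have VAnz : VA != 0.
  apply/negP => /eqP h0; move: rk; rewrite h0 mxrank0 => /esym /eqP.
  by rewrite addn_eq0 andbb => /eqP n0; rewrite n0 in hn.
have ipnz : ip V VA != 0.
  by apply: contra VAnz => /eqP h; apply/eqP; apply: ip_eq0; rewrite ipVVA h mul0rn.
have hA : form (t^-1 *: gammaeps a b e) (vecm VA) != 0.
  rewrite frho mat_vecm formIF_anti // add0r.
  apply: mulf_neq0; first by rewrite invr_eq0 lt0r_neq0.
  apply: mulf_neq0; first exact: lt0r_neq0.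
  by rewrite mulrC mul_conjC_eq0.
rewrite fsep in hA.
have [m hm] := sum_neq0 hA.
have hs0 : \sum_r \sum_s G m r s (vecm VA) != 0 by apply: contraNneq hm => ->; rewrite mulr0.
have [r hr] := sum_neq0 hs0.
have [s hs] := sum_neq0 hr.
have pm0 : p m != 0 by apply: contraNneq hm => ->; rewrite mul0r.
set z := X m r *t Y m s.
have hw : ip (mat z) VA != 0.
  by rewrite -[VA in ip _ VA]mat_vecm -dotE; apply: contraNneq hs => h; rewrite /G -/z h mulr0.
have hB : forall U, U^T = - U -> ip V U = 0 -> ip (mat z) U = 0.
  move=> U hU hVU.
  have h0 : form (t^-1 *: gammaeps a b e) (vecm U) = 0.
    by rewrite frho mat_vecm formIF_anti // hVU mulr0 add0r mulr0 mulr0.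
  rewrite fsep in h0.
  have nn1 : forall i : 'I_N, true -> 0 <= p i * \sum_r \sum_s G i r s (vecm U).
    move=> i _; apply: mulr_ge0 => //; apply: sumr_ge0 => r' _; apply: sumr_ge0 => s' _; exact: Gge0.
  have h1 := @psumr_eq0P _ _ _ _ nn1 h0 m isT.
  move/eqP: h1; rewrite mulf_eq0 (negbTE pm0) /= => /eqP h1.
  have nn2 : forall r' : 'I_k, true -> 0 <= \sum_s G m r' s (vecm U).
    by move=> r' _; apply: sumr_ge0 => s' _; exact: Gge0.
  have h2 := @psumr_eq0P _ _ _ _ nn2 h1 r isT.
  have nn3 : forall s' : 'I_k, true -> 0 <= G m r s' (vecm U) by move=> s' _; exact: Gge0.
  have h3 := @psumr_eq0P _ _ _ _ nn3 h2 s isT.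
  move/eqP: h3; rewrite /G -/z mulrC mul_conjC_eq0 => /eqP.
  by rewrite dotE mat_vecm.
have := @stepC _ _ V (mat z) (X m r) (Y m s) (mat_tens _ _) hw hB.
rewrite -/VA rk => h.
by have := leq_trans (leq_add hn hn) h.
Qed.
End Final.

Theorem mainTheorem1 (R : realType) (k n : nat) (hk : (4 <= k)%N) (hn : (2 <= n)%N)
  (a b : 'I_n -> 'cV[R[i]]_k) (hind : lin_indep2 a b) :
  exists eps0 : R[i], 0 < eps0 /\
    forall eps : R[i], 0 < eps -> eps < eps0 ->
      let rho := (\tr (gammaeps a b eps))^-1 *: gammaeps a b eps in
      entangled rho /\ psdmx (ptrans rho) /\ realign (gammaeps a b eps) \in unitmx.
Proof.
have hk0 : (0 < k)%N by apply: leq_trans hk.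
set S1 := \sum_p \sum_q `|ptrans (vvec a b *m adjmx (vvec a b)) p q|.
set S2 := \sum_p \sum_q `|(realign (vvec a b *m adjmx (vvec a b)) *m Minv _ k) p q|.
have S1ge : 0 <= S1 by apply: sumr_ge0 => p _; apply: sumr_ge0 => q _.
have S2ge : 0 <= S2 by apply: sumr_ge0 => p _; apply: sumr_ge0 => q _.
set D : R[i] := 1 + S1 *+ 2 + S2.
have hD1 : 1 <= D by rewrite /D -addrA lerDl addr_ge0 // mulrn_wge0.
have Dpos : 0 < D by apply: lt_le_trans ltr01 hD1.
exists D^-1; split; first by rewrite invr_gt0.
move=> e he heD rho; rewrite /rho.
have eD : e * D < 1 by rewrite -ltr_pdivlMr // mul1r.
have e1 : e * (S1 *+ 2) <= 1.
  apply: le_trans (ltW eD); rewrite ler_pM2l //.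
  by rewrite /D -addrA addrCA lerDl addr_ge0.
have e2 : `|e| * S2 < 1.
  rewrite gtr0_norm //; apply: le_lt_trans eD; rewrite ler_pM2l //.
  by rewrite /D lerDr addr_ge0 // mulrn_wge0.
split; first split.
- exact: density_rho.
- exact: not_sep.
split; first exact: ppt_rho.
exact: realign_unit.
Qed.
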